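(* (i) If $(A,W)$ is a Pratt comonoid, then so is $(A,W^\neg)$, where $W^\neg=\{A-w\mid w\in W\}$; and if $(A,W)$ is $T_1$, so is $(A,W^\neg)$. (ii) If $\{(A,W_i)\mid i\in I\}$ is a (finite or infinite) set of Pratt comonoids with the same base-set $A$, then $(A,\bigcap_{i\in I}W_i)$ is a Pratt comonoid. (iii) If $f:A\to A'$ is a map of sets and $(A,W)$ is a Pratt comonoid, and $W'=\{w\subseteq A'\mid f^{-1}(w)\in W\}$, then $(A',W')$ is a Pratt comonoid. (iv) If $(A,W)$ is a Pratt comonoid and $u\subseteq v$ are elements of $W$, then $(A_{u,v},W_{u,v})$ is a Pratt comonoid, where $A_{u,v}=v-u$ and $W_{u,v}=\{x-u\mid x\in W,\ u\subseteq x\subseteq v\}$.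
   Context: A Pratt comonoid is a pair $(A,W)$ where $A$ is a set and $W$ is a set of subsets of $A$ such that (i) $\emptyset\in W$ and $A\in W$; (ii) whenever $C\subseteq A\times A$ is such that for every $a\in A$ both the $a$-th row $\{b\mid (a,b)\in C\}$ and the $a$-th column $\{b\mid (b,a)\in C\}$ belong to $W$ (a crossword over $W$), the diagonal $\{b\mid (b,b)\in C\}$ also belongs to $W$. $A$ is called the base-set. $(A,W)$ is $T_1$ if for all distinct $a,b\in A$ some member of $W$ contains $a$ but not $b$. *)

(* Defs.v *)
Definition crossword {A : Type} (W : (A -> Prop) -> Prop) (C : A -> A -> Prop) : Prop :=
  forall a : A, W (fun b => C a b) /\ W (fun b => C b a).

Definition pratt_comonoid (A : Type) (W : (A -> Prop) -> Prop) : Prop :=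
  W (fun _ => False) /\ W (fun _ => True) /\
  (forall C : A -> A -> Prop, crossword W C -> W (fun b => C b b)).

Definition T1 (A : Type) (W : (A -> Prop) -> Prop) : Prop :=
  forall a b : A, a <> b -> exists w, W w /\ w a /\ ~ w b.

Definition Wneg {A : Type} (W : (A -> Prop) -> Prop) : (A -> Prop) -> Prop :=
  fun s => exists w, W w /\ s = (fun x => ~ w x).

Definition Wbigcap {A I : Type} (Ws : I -> (A -> Prop) -> Prop) : (A -> Prop) -> Prop :=
  fun s => forall i : I, Ws i s.

Definition Wpush {A A' : Type} (f : A -> A') (W : (A -> Prop) -> Prop) : (A' -> Prop) -> Prop :=
  fun w => W (fun a => w (f a)).

Definition Auv {A : Type} (u v : A -> Prop) : Type := { a : A | v a /\ ~ u a }.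

Definition Wuv {A : Type} (W : (A -> Prop) -> Prop) (u v : A -> Prop) : (Auv u v -> Prop) -> Prop :=
  fun s => exists x, W x /\ (forall a, u a -> x a) /\ (forall a, x a -> v a) /\
                     s = (fun p : Auv u v => x (proj1_sig p)).

(* Main.v *)
Require Import Defs.
From Stdlib Require Import Classical FunctionalExtensionality PropExtensionality ProofIrrelevance.

Ltac pext := apply propositional_extensionality.
Ltac fext := let x := fresh "x" in apply functional_extensionality; intro x.

Lemma part1 (A : Type) (W : (A -> Prop) -> Prop) :
  pratt_comonoid A W ->
  pratt_comonoid A (Wneg W) /\ (T1 A W -> T1 A (Wneg W)).
Proof.
  intros [H0 [H1 HC]]. split.
  - split; [|split].
    + exists (fun _ => True). split; auto. fext. pext. tauto.
    + exists (fun _ => False). split; auto. fext. pext. tauto.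
    + intros C HCW.
      assert (HD : W (fun b => ~ C b b)).
      { apply (HC (fun a b => ~ C a b)). intro a. destruct (HCW a) as [[w [Hw E]] [w' [Hw' E']]].
        split.
        - replace (fun b => ~ C a b) with w; auto. fext.
          change (~ C a x) with (~ (fun b => C a b) x). rewrite E. pext. tauto.
        - replace (fun b => ~ C b a) with w'; auto. fext.
          change (~ C x a) with (~ (fun b => C b a) x). rewrite E'. pext. tauto. }
      exists (fun b => ~ C b b). split; auto. fext. pext. tauto.
  - intros HT a b Hab. destruct (HT b a (fun e => Hab (eq_sym e))) as [w [Hw [Hb Ha]]].
    exists (fun x => ~ w x). split; [exists w; split; auto | simpl; split; [exact Ha | intro n; exact (n Hb)]].
Qed.

Lemma part2 (A I : Type) (Ws : I -> (A -> Prop) -> Prop) :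
  (forall i, pratt_comonoid A (Ws i)) -> pratt_comonoid A (Wbigcap Ws).
Proof.
  intros H. split; [|split].
  - intro i. apply (proj1 (H i)).
  - intro i. apply (proj1 (proj2 (H i))).
  - intros C HC i. apply (proj2 (proj2 (H i))). intro a. split; apply (HC a).
Qed.

Lemma part3 (A A' : Type) (f : A -> A') (W : (A -> Prop) -> Prop) :
  pratt_comonoid A W -> pratt_comonoid A' (Wpush f W).
Proof.
  intros [H0 [H1 HC]]. split; [exact H0|split; [exact H1|]].
  intros C HCW. unfold Wpush. apply (HC (fun a b => C (f a) (f b))).
  intro a. exact (HCW (f a)).
Qed.

Lemma part4 (A : Type) (W : (A -> Prop) -> Prop) (u v : A -> Prop) :
  pratt_comonoid A W -> W u -> W v -> (forall a, u a -> v a) ->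
  pratt_comonoid (Auv u v) (Wuv W u v).
Proof.
  intros [H0 [H1 HC]] Hu Hv Huv. split; [|split].
  - exists u. split; auto. split; auto. split; auto.
    fext. destruct x as [a [h1 h2]]. simpl. pext. tauto.
  - exists v. split; auto. split; auto. split; auto.
    fext. destruct x as [a [h1 h2]]. simpl. pext. tauto.
  - intros C HCW.
    set (D := fun a b => u a \/ u b \/
               exists (ha : v a /\ ~ u a) (hb : v b /\ ~ u b),
                 C (exist _ a ha) (exist _ b hb)).
    assert (HD : W (fun b => D b b)).
    { apply HC. intro a. unfold D.
      destruct (classic (u a)) as [ua|nua].
      - split; (replace (fun _ : A => _) with (fun _ : A => True); [exact H1|fext; pext; tauto]).
      - destruct (classic (v a)) as [va|nva].
        + set (p := exist (fun a => v a /\ ~ u a) a (conj va nua) : Auv u v).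
          destruct (HCW p) as [[x [Hx [ux [xv E]]]] [y [Hy [uy [yv E']]]]].
          split.
          * replace (fun _ : A => _) with x; auto. fext. pext. split.
            -- intro hx. destruct (classic (u x0)); [tauto|].
               right; right. exists (conj va nua), (conj (xv _ hx) H).
               pose proof (equal_f E (exist _ x0 (conj (xv x0 hx) H))) as Q. simpl in Q.
               unfold p in Q; rewrite Q; exact hx.
            -- intros [h|[h|[ha [hb hc]]]]; [exfalso; exact (nua h)|exact (ux _ h)|].
               assert (ha = conj va nua) by apply proof_irrelevance. subst ha.
               pose proof (equal_f E (exist _ x0 hb)) as Q. simpl in Q. unfold p in Q; rewrite Q in hc. exact hc.
          * replace (fun _ : A => _) with y; auto. fext. pext. split.
            -- intro hx. destruct (classic (u x0)); [tauto|].
               right; right. exists (conj (yv _ hx) H), (conj va nua).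
               pose proof (equal_f E' (exist _ x0 (conj (yv x0 hx) H))) as Q. simpl in Q.
               unfold p in Q; rewrite Q; exact hx.
            -- intros [h|[h|[ha [hb hc]]]]; [exact (uy _ h)|exfalso; exact (nua h)|].
               assert (hb = conj va nua) by apply proof_irrelevance. subst hb.
               pose proof (equal_f E' (exist _ x0 ha)) as Q. simpl in Q. unfold p in Q; rewrite Q in hc. exact hc.
        + split; (replace (fun _ : A => _) with u; [exact Hu|]); fext; pext;
            (split; [intro h; first [left; exact h | right; left; exact h]|]); intros [h|[h|[ha [hb hc]]]]; solve [exact h | exfalso; exact (nua h) | exfalso; exact (nva (proj1 ha)) | exfalso; exact (nva (proj1 hb))]. }
    exists (fun b => D b b). split; auto. split.
    + intros a ua. unfold D. tauto.
    + split.
      * intros a [h|[h|[ha _]]]; [auto|auto|tauto].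
      * fext. destruct x as [a h]. simpl. unfold D. pext. split.
        -- intro c. right; right. exists h, h. exact c.
        -- intros [h'|[h'|[ha [hb hc]]]]; [exfalso; exact (proj2 h h')|exfalso; exact (proj2 h h')|].
           rewrite (proof_irrelevance _ ha h), (proof_irrelevance _ hb h) in hc. exact hc.
Qed.

Theorem lemma2p2 :
  (* (i) *)
  (forall (A : Type) (W : (A -> Prop) -> Prop),
     pratt_comonoid A W ->
     pratt_comonoid A (Wneg W) /\ (T1 A W -> T1 A (Wneg W))) /\
  (* (ii) *)
  (forall (A I : Type) (Ws : I -> (A -> Prop) -> Prop),
     (forall i, pratt_comonoid A (Ws i)) -> pratt_comonoid A (Wbigcap Ws)) /\
  (* (iii) *)
  (forall (A A' : Type) (f : A -> A') (W : (A -> Prop) -> Prop),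
     pratt_comonoid A W -> pratt_comonoid A' (Wpush f W)) /\
  (* (iv) *)
  (forall (A : Type) (W : (A -> Prop) -> Prop) (u v : A -> Prop),
     pratt_comonoid A W -> W u -> W v -> (forall a, u a -> v a) ->
     pratt_comonoid (Auv u v) (Wuv W u v)).
Proof.
  split; [exact part1|split; [exact part2|split; [exact part3|exact part4]]].
Qed.
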